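(* Let $p$ be a prime, $d\geq4$ even, $n\geq2$, $q=p^f$ with $f\in\{1,2,\ldots\}\cup\{\infty\}$ (convention $p^\infty=0$, $f\geq2$ if $p=2$), and let $G=\langle x_1,\ldots,x_d\mid r_0\rangle$ be a one-relator pro-$p$ group (minimal presentation) with $r_0=x_1^q[x_1,{}_n\,x_2][x_3,x_4][x_5,x_6]\cdots[x_{d-1},x_d]\cdot s$, where $s\in S''$ and $S$ is the closed subgroup generated by $x_3,\ldots,x_d$. Then every defined $3$-fold Massey product in $H^\bullet(G,\mathbb{F}_p)$ vanishes if and only if $q\neq3$ and $n\geq3$.
   Context: Commutators $[x,y]=x^{-1}y^{-1}xy$, $[y,{}_k x]$ left-normed; $H''$ is the closed commutator subgroup of $H'$. For $\psi_1,\ldots,\psi_m\in H^1(G,\mathbb{F}_p)=\mathrm{Hom}(G,\mathbb{F}_p)$, $\langle\psi_1,\ldots,\psi_m\rangle\subseteq H^2(G,\mathbb{F}_p)$ is the standard $m$-fold Massey product; defined if nonempty, vanishing if it contains $0$. Equivalently, with $\mathbb{U}_{m+1}$ the upper unitriangular $(m+1)\times(m+1)$ matrices over $\mathbb{F}_p$ and $Z$ its center: defined iff there is a continuous homomorphism $G\to\mathbb{U}_{m+1}/Z$ with $(i,i+1)$-entries $\psi_i$, vanishing iff there is a continuous homomorphism $G\to\mathbb{U}_{m+1}$ with $(i,i+1)$-entries $\psi_i$. *)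

(* Defs.v *)
From mathcomp Require Import all_boot all_fingroup all_algebra all_solvable.

Set Implicit Arguments.
Unset Strict Implicit.
Unset Printing Implicit Defensive.

Local Open Scope group_scope.

(* Elements of the free pro-p group on d generators x_0, ..., x_{d-1}.      *)
(* An element w of the free pro-p group F is the same thing as a natural    *)
(* "word map": for every finite p-group P and every d-tuple g of elements   *)
(* of P (i.e. every continuous homomorphism F -> P, x_i |-> g i) it gives   *)
(* the image of w, naturally in P.  We model finite p-groups as the         *)
(* subgroups <<g>> of finGroupTypes that happen to be p-groups.             *)

Definition gens (gT : finGroupType) (d : nat) (g : 'I_d -> gT) : {set gT} :=
  <<[set g i | i : 'I_d]>>.

Record ppword (p d : nat) := PPWord {
  pw_eval : forall gT : finGroupType, ('I_d -> gT) -> gT;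
  pw_in : forall (gT : finGroupType) (g : 'I_d -> gT),
    p.-group (gens g) -> pw_eval g \in gens g;
  pw_nat : forall (gT hT : finGroupType) (D : {group gT})
      (phi : {morphism D >-> hT}) (g : 'I_d -> gT),
    p.-group (gens g) -> (forall i, g i \in D) ->
    pw_eval (fun i => phi (g i)) = phi (pw_eval g)
}.

(* generator x_{k} (0-based), 1 if k is out of range *)
Definition gat (gT : finGroupType) (d : nat) (g : 'I_d -> gT) (k : nat) : gT :=
  if insub k is Some i then g i else 1.

(* The subgroup S generated by x_3, ..., x_d (0-based indices 2 .. d-1) *)
Definition gensS (gT : finGroupType) (d : nat) (g : 'I_d -> gT) : {set gT} :=
  <<[set g i | i : 'I_d & 2 <= val i]>>.

(* s lies in S'' (closed second derived subgroup of S): equivalently its   *)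
(* image under every homomorphism to a finite p-group lies in the second   *)
(* derived subgroup of the image of S.                                     *)
Definition in_S2 (p d : nat) (s : ppword p d) : Prop :=
  forall (gT : finGroupType) (g : 'I_d -> gT),
    p.-group (gens g) -> pw_eval s g \in (gensS g)^`(2).

(* q = p^f, with f = None standing for f = infinity and p^infinity = 0 *)
Definition qval (p : nat) (f : option nat) : nat :=
  match f with Some k => p ^ k | None => 0 end.

Definition comm_iter (gT : finGroupType) (y x : gT) (n : nat) : gT :=
  iter n (fun z => [~ z, x]) y.

(* Evaluation of the relator
   r0 = x_1^q [x_1, _n x_2] [x_3,x_4][x_5,x_6]...[x_{d-1},x_d] * s
   at a tuple g (1-based x_i = g (i-1)). *)
Definition relator (p d n : nat) (f : option nat) (s : ppword p d)
    (gT : finGroupType) (g : 'I_d -> gT) : gT :=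
  (gat g 0) ^+ (qval p f) * comm_iter (gat g 0) (gat g 1) n *
  (\prod_(k < d./2 - 1) [~ gat g (2 * k + 2), gat g (2 * k + 3)]) *
  pw_eval s g.

(* Continuous homomorphisms G = <x_1..x_d | r0> -> H, for H a finite       *)
(* p-subgroup (given as a set H of a finGroupType), are the tuples of       *)
(* elements of H (images of the generators) killing the relator.            *)
Definition hom_tuple (p d n : nat) (f : option nat) (s : ppword p d)
    (gT : finGroupType) (H : {set gT}) (g : 'I_d -> gT) : Prop :=
  (forall j, g j \in H) /\ relator n f s g = 1.

Definition unitri (p : nat) (M : 'M['F_p]_4) : bool :=
  [forall i : 'I_4, forall j : 'I_4,
     ((j < i)%N ==> (M i j == 0%R)) && ((i == j) ==> (M i j == 1%R))].

Definition U4 (p : nat) : {set {'GL_4['F_p]}} :=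
  [set A : {'GL_4['F_p]} | unitri (GLval A)].

Definition Z4 (p : nat) : {set {'GL_4['F_p]}} :=
  [set A : {'GL_4['F_p]} | unitri (GLval A) &&
     [forall i : 'I_4, forall j : 'I_4,
        ((i < j)%N && ~~ ((val i == 0%N) && (val j == 3%N))) ==>
        (GLval A i j == 0%R)]].

(* (i, i+1) entry of a matrix, i : 'I_3 standing for the 1-based index i+1 *)
Definition supd (p : nat) (M : 'M['F_p]_4) (i : 'I_3) : 'F_p :=
  M (widen_ord (isT : (3 <= 4)%N) i) (lift ord0 i).

(* Triple Massey products via the unipotent characterisation.               *)
(* psi i : 'I_d -> 'F_p is the element psi_{i+1} of H^1(G,F_p) =           *)
(* Hom(G,F_p), given by its values on the generators; it is a homomorphism  *)
(* iff it kills the relator (F_p viewed as its additive finite group).      *)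

Definition massey3_defined (p d n : nat) (f : option nat) (s : ppword p d)
    (psi : 'I_3 -> 'I_d -> 'F_p) : Prop :=
  exists rho : 'I_d -> coset_of (Z4 p),
    hom_tuple n f s (U4 p / Z4 p) rho /\
    forall j, exists A : {'GL_4['F_p]},
      [/\ A \in U4 p, coset (Z4 p) A = rho j &
          forall i, supd (GLval A) i = psi i j].

Definition massey3_vanishes (p d n : nat) (f : option nat) (s : ppword p d)
    (psi : 'I_3 -> 'I_d -> 'F_p) : Prop :=
  exists sigma : 'I_d -> {'GL_4['F_p]},
    hom_tuple n f s (U4 p) sigma /\
    forall j i, supd (GLval (sigma j)) i = psi i j.

Definition all_defined_massey3_vanish (p d n : nat) (f : option nat)
    (s : ppword p d) : Prop :=
  forall psi : 'I_3 -> 'I_d -> 'F_p,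
    (forall i, hom_tuple n f s [set: 'F_p] (psi i)) ->
    massey3_defined n f s psi -> massey3_vanishes n f s psi.

(* Main.v *)
Require Import Defs.
From mathcomp Require Import all_boot all_fingroup all_algebra all_solvable.
From mathcomp Require Import ring zify.
From Stdlib Require Import FunctionalExtensionality.
Set Implicit Arguments. Unset Strict Implicit. Unset Printing Implicit Defensive.
Import GRing.Theory.

Section Coords.
Variable p : nat.
Local Notation F := 'F_p.
Local Notation G := {'GL_4[F]}.
Local Notation o0 := (@Ordinal 4 0 isT).
Local Notation o1 := (@Ordinal 4 1 isT).
Local Notation o2 := (@Ordinal 4 2 isT).
Local Notation o3 := (@Ordinal 4 3 isT).

Local Open Scope ring_scope.

Definition mkM (a b c d e g : F) : 'M[F]_4 :=
  \matrix_(i < 4, j < 4)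
    match val i, val j with
    | 0, 1 => a | 1, 2 => b | 2, 3 => c | 0, 2 => d | 1, 3 => e | 0, 3 => g
    | i', j' => if i' == j' then 1 else 0 end.

Lemma mkM_mul a b c d e g a' b' c' d' e' g' :
  mkM a b c d e g *m mkM a' b' c' d' e' g' =
  mkM (a + a') (b + b') (c + c') (d + a * b' + d') (e + b * c' + e')
      (g + a * e' + d * c' + g').
Proof.
apply/matrixP => i j; rewrite !mxE !big_ord_recl big_ord0 !mxE /=.
case: i => [[|[|[|[|i]]]] Hi] //; case: j => [[|[|[|[|j]]]] Hj] //= ; ring.
Qed.

Lemma mkM_unit a b c d e g : mkM a b c d e g \in unitmx.
Proof.
rewrite unitmxE -det_tr det_trig; last first.
  apply/is_trig_mxP => i j; rewrite !mxE.
  by case: i => [[|[|[|[|i]]]] Hi] //; case: j => [[|[|[|[|j]]]] Hj].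
by rewrite !big_ord_recl big_ord0 !mxE /= !mul1r unitr1.
Qed.

Definition mkG a b c d e g : G := FinRing.Unit (mkM_unit a b c d e g).

Lemma mkGE a b c d e g : GLval (mkG a b c d e g) = mkM a b c d e g.
Proof. by []. Qed.

Lemma mkM_inj a b c d e g a' b' c' d' e' g' :
  mkM a b c d e g = mkM a' b' c' d' e' g' ->
  a = a' /\ b = b' /\ c = c' /\ d = d' /\ e = e' /\ g = g'.
Proof.
move=> E.
have H := fun i j => congr1 (fun M : 'M[F]_4 => M i j) E.
move: (H o0 o1) (H o1 o2) (H o2 o3) (H o0 o2) (H o1 o3) (H o0 o3).
by rewrite !mxE /= => -> -> -> -> -> ->.
Qed.

Definition ent (x : G) (i j : 'I_4) : F := GLval x i j.
Definition cM (x : G) : 'M[F]_4 :=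
  mkM (ent x o0 o1) (ent x o1 o2) (ent x o2 o3) (ent x o0 o2) (ent x o1 o3) (ent x o0 o3).

Lemma U4P (x : G) : x \in U4 p -> GLval x = cM x.
Proof.
rewrite inE => /forallP H; apply/matrixP => i j.
have /forallP/(_ j)/andP[/implyP H1 /implyP H2] := H i.
rewrite /cM /ent !mxE.
case: i H1 H2 => [[|[|[|[|i]]]] Hi] //; case: j => [[|[|[|[|j]]]] Hj] //= H1 H2;
  try (by apply/eqP/H1); try (by apply/eqP/H2);
  by congr (GLval x _ _); apply: val_inj.
Qed.

Lemma mkM_unitri a b c d e g : unitri (mkM a b c d e g).
Proof.
apply/forallP => i; apply/forallP => j; rewrite !mxE.
by case: i => [[|[|[|[|i]]]] Hi] //; case: j => [[|[|[|[|j]]]] Hj].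
Qed.

Lemma inU4 (x : G) a b c d e g : GLval x = mkM a b c d e g -> x \in U4 p.
Proof. by rewrite inE => ->; apply: mkM_unitri. Qed.

Lemma mkM1 : mkM 0 0 0 0 0 0 = 1.
Proof.
apply/matrixP => i j; rewrite !mxE.
by case: i => [[|[|[|[|i]]]] Hi] //; case: j => [[|[|[|[|j]]]] Hj].
Qed.

Definition ea x := ent x o0 o1.
Definition eb x := ent x o1 o2.
Definition ec x := ent x o2 o3.
Definition ed x := ent x o0 o2.
Definition ee x := ent x o1 o3.
Definition eg x := ent x o0 o3.

Lemma entE (x : G) a b c d e g : GLval x = mkM a b c d e g ->
  ea x = a /\ eb x = b /\ ec x = c /\ ed x = d /\ ee x = e /\ eg x = g.
Proof. by rewrite /ea /eb /ec /ed /ee /eg /ent => ->; rewrite !mxE. Qed.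

Lemma GL_eq (x y : G) : GLval x = GLval y -> x = y.
Proof. exact: val_inj. Qed.

Lemma U4M (x y : G) : x \in U4 p -> y \in U4 p ->
  GLval (x * y)%g = mkM (ea x + ea y) (eb x + eb y) (ec x + ec y)
    (ed x + ea x * eb y + ed y) (ee x + eb x * ec y + ee y)
    (eg x + ea x * ee y + ed x * ec y + eg y).
Proof. by move=> /U4P Hx /U4P Hy; rewrite GL_MxE Hx Hy mkM_mul. Qed.

Lemma U4V (x : G) : x \in U4 p ->
  GLval (x^-1)%g = mkM (- ea x) (- eb x) (- ec x) (ea x * eb x - ed x)
     (eb x * ec x - ee x) (- eg x - ea x * eb x * ec x + ea x * ee x + ec x * ed x).
Proof.
move=> Hx.
set M := mkM _ _ _ _ _ _.
have H1 : GLval x * M = 1.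
  change (GLval x *m M = 1); rewrite (U4P Hx) /cM mkM_mul -mkM1; congr mkM; rewrite /ea /eb /ec /ed /ee /eg; ring.
have E : GLval x^-1 * GLval x = 1 by rewrite -GL_ME mulVg.
by rewrite -[LHS]mulr1 -H1 mulrA E mul1r.
Qed.

Lemma U4_1 : (1%g : G) \in U4 p.
Proof. by apply: (@inU4 _ 0 0 0 0 0 0); rewrite mkM1. Qed.

Lemma U4_gs : group_set (U4 p).
Proof.
apply/andP; split; first exact: U4_1.
apply/subsetP => z /mulsgP[x y Hx Hy ->].
exact: inU4 (U4M Hx Hy).
Qed.
Canonical U4g := Group U4_gs.

Definition comm03 (x y : G) : F :=
  - ea x * eb x * ec y + ea x * ec x * eb y + ea x * ee y - eb x * ea y * ec y
  + ec x * ea y * eb y - ec x * ed y + ed x * ec y - ee x * ea y.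

Lemma U4R (x y : G) : x \in U4 p -> y \in U4 p ->
  GLval [~ x, y]%g = mkM 0 0 0 (ea x * eb y - eb x * ea y)
     (eb x * ec y - ec x * eb y) (comm03 x y).
Proof.
move=> Hx Hy.
have -> : [~ x, y]%g = (x^-1 * y^-1 * x * y)%g by rewrite /commg /conjg !mulgA.
rewrite !GL_MxE (U4V Hx) (U4V Hy) (U4P Hx) (U4P Hy) /cM !mkM_mul /comm03.
congr mkM; rewrite /ea /eb /ec /ed /ee /eg; ring.
Qed.

Definition nM (a b c d e g : F) : 'M[F]_4 :=
  \matrix_(i < 4, j < 4)
    match val i, val j with
    | 0, 1 => a | 1, 2 => b | 2, 3 => c | 0, 2 => d | 1, 3 => e | 0, 3 => g
    | _, _ => 0 end.

Lemma nM_mul a b c d e g a' b' c' d' e' g' :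
  nM a b c d e g *m nM a' b' c' d' e' g' =
  nM 0 0 0 (a * b') (b * c') (a * e' + d * c').
Proof.
apply/matrixP => i j; rewrite !mxE !big_ord_recl big_ord0 !mxE /=.
case: i => [[|[|[|[|i]]]] Hi] //; case: j => [[|[|[|[|j]]]] Hj] //= ; ring.
Qed.

Lemma mkM_nM a b c d e g : mkM a b c d e g = 1 + nM a b c d e g.
Proof.
apply/matrixP => i j; rewrite !mxE.
case: i => [[|[|[|[|i]]]] Hi] //; case: j => [[|[|[|[|j]]]] Hj] //=; ring.
Qed.

Lemma nM4 a b c d e g : (nM a b c d e g) ^+ 4 = 0.
Proof.
set N := nM a b c d e g.
have -> : N ^+ 4 = (N * N) * (N * N) by rewrite !exprS expr0 mulr1 !mulrA.
change ((N *m N) *m (N *m N) = 0).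
rewrite /N !nM_mul.
apply/matrixP => i j; rewrite !mxE.
case: i => [[|[|[|[|i]]]] Hi] //; case: j => [[|[|[|[|j]]]] Hj] //=; ring.
Qed.

Hypothesis pp : prime p.

Lemma pchar_M4 : p \in [pchar 'M[F]_4].
Proof.
apply/andP; split => //; apply/eqP/matrixP => i j.
by rewrite mulmxnE !mxE -mulr_natr pchar_Fp_0 // mulr0.
Qed.

Lemma GL_X (x : G) m : GLval (x ^+ m)%g = GLval x ^+ m.
Proof.
elim: m => [|m IH]; first by [].
by rewrite expgS GL_ME IH exprS.
Qed.

Lemma U4X (x : G) k : x \in U4 p -> (4 <= p ^ k)%N -> (x ^+ (p ^ k))%g = 1%g.
Proof.
move=> Hx Hk; apply: GL_eq; rewrite GL_X (U4P Hx) /cM mkM_nM.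
set N := nM _ _ _ _ _ _.
have Fr : forall u v : 'M[F]_4, GRing.comm u v -> (u + v) ^+ p = u ^+ p + v ^+ p.
  by move=> u v c; exact: (pFrobenius_autD_comm pchar_M4 c).
have E : forall k, (1 + N) ^+ (p ^ k) = 1 + N ^+ (p ^ k).
  elim=> [|k' IH]; first by rewrite !expr1.
  by rewrite expnSr !exprM IH Fr ?expr1n //; apply: commr_sym; apply: commr1.
rewrite E.
have -> : N ^+ (p ^ k) = N ^+ 4 * N ^+ (p ^ k - 4) by rewrite -exprD subnKC.
by rewrite nM4 mul0r addr0.
Qed.

Lemma U4_eq (x y : G) : x \in U4 p -> y \in U4 p ->
  ea x = ea y -> eb x = eb y -> ec x = ec y -> ed x = ed y -> ee x = ee y ->
  eg x = eg y -> x = y.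
Proof.
move=> Hx Hy ea eb ec ed ee eg; apply: GL_eq; rewrite (U4P Hx) (U4P Hy).
by rewrite /cM; congr mkM.
Qed.

Lemma U4_eq1 (x : G) : x \in U4 p ->
  ea x = 0 -> eb x = 0 -> ec x = 0 -> ed x = 0 -> ee x = 0 -> eg x = 0 -> x = 1%g.
Proof.
move=> Hx ea eb ec ed ee eg; apply: GL_eq; rewrite (U4P Hx) /cM.
by rewrite /ea /eb /ec /ed /ee /eg in ea eb ec ed ee eg;
  rewrite ea eb ec ed ee eg mkM1.
Qed.

Lemma ent1 : ea 1%g = 0 /\ eb 1%g = 0 /\ ec 1%g = 0 /\ ed 1%g = 0 /\ ee 1%g = 0 /\ eg 1%g = 0.
Proof. by apply: entE; rewrite mkM1. Qed.

Definition V4 : {set G} :=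
  [set x | [&& x \in U4 p, ea x == 0, eb x == 0 & ec x == 0]].

Lemma Z4P (x : G) : x \in Z4 p =
  [&& x \in U4 p, ea x == 0, eb x == 0, ec x == 0 & (ed x == 0) && (ee x == 0)].
Proof.
apply/idP/idP.
  rewrite inE => /andP[Hu /forallP H].
  have Hx : x \in U4 p by rewrite inE.
  rewrite Hx /=.
  have K : forall i j : 'I_4, (i < j)%N -> ~~ ((val i == 0%N) && (val j == 3%N)) ->
    GLval x i j == 0.
    by move=> i j h1 h2; move: (H i) => /forallP /(_ j) /implyP; apply; rewrite h1 h2.
  by rewrite /ea /eb /ec /ed /ee /ent !K.
case/and5P => Hx /eqP Ha /eqP Hb /eqP Hc /andP[/eqP Hd /eqP He].
move: (Hx); rewrite !inE => -> /=.
apply/forallP => i; apply/forallP => j; apply/implyP => Hij.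
rewrite (U4P Hx) /cM !mxE.
rewrite /ea /eb /ec /ed /ee in Ha Hb Hc Hd He.
move: Hij.
by case: i => [[|[|[|[|i]]]] Hi] //; case: j => [[|[|[|[|j]]]] Hj] //=;
  rewrite ?Ha ?Hb ?Hc ?Hd ?He.
Qed.

Lemma entM (x y : G) : x \in U4 p -> y \in U4 p ->
  [/\ ea (x * y)%g = ea x + ea y, eb (x * y)%g = eb x + eb y,
      ec (x * y)%g = ec x + ec y, ed (x * y)%g = ed x + ea x * eb y + ed y &
      ee (x * y)%g = ee x + eb x * ec y + ee y /\
      eg (x * y)%g = eg x + ea x * ee y + ed x * ec y + eg y].
Proof.
move=> Hx Hy; have [-> [-> [-> [-> [-> ->]]]]] := entE (U4M Hx Hy).
by [].
Qed.

Lemma entR (x y : G) : x \in U4 p -> y \in U4 p ->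
  [/\ ea [~ x, y]%g = 0, eb [~ x, y]%g = 0,
      ec [~ x, y]%g = 0, ed [~ x, y]%g = ea x * eb y - eb x * ea y &
      ee [~ x, y]%g = eb x * ec y - ec x * eb y /\
      eg [~ x, y]%g = comm03 x y].
Proof.
move=> Hx Hy; have [-> [-> [-> [-> [-> ->]]]]] := entE (U4R Hx Hy).
by [].
Qed.

Lemma U4R_in (x y : G) : x \in U4 p -> y \in U4 p -> [~ x, y]%g \in U4 p.
Proof. by move=> Hx Hy; apply: inU4 (U4R Hx Hy). Qed.

Lemma V4P (x : G) : x \in V4 = [&& x \in U4 p, ea x == 0, eb x == 0 & ec x == 0].
Proof. by rewrite /V4 in_set. Qed.

Lemma V4_gs : group_set V4.
Proof.
apply/andP; split.
  by rewrite V4P U4_1; have [-> [-> [-> _]]] := ent1; rewrite eqxx.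
apply/subsetP => z /mulsgP[x y]; rewrite !V4P.
case/and4P => Hx /eqP ax /eqP bx /eqP cx; case/and4P => Hy /eqP ay /eqP by_ /eqP cy ->.
have [-> -> -> _ _] := entM Hx Hy.
by rewrite (inU4 (U4M Hx Hy)) ax bx cx ay by_ cy !addr0 eqxx.
Qed.
Canonical V4g := Group V4_gs.

Lemma Z4_gs : group_set (Z4 p).
Proof.
apply/andP; split.
  by rewrite Z4P U4_1; have [-> [-> [-> [-> [-> _]]]]] := ent1; rewrite eqxx.
apply/subsetP => z /mulsgP[x y]; rewrite !Z4P.
case/and5P => Hx /eqP ax /eqP bx /eqP cx /andP[/eqP dx /eqP ex].
case/and5P => Hy /eqP ay /eqP by_ /eqP cy /andP[/eqP dy /eqP ey] ->.
have [-> -> -> -> [-> _]] := entM Hx Hy.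
rewrite (inU4 (U4M Hx Hy)) ax bx cx dx ex ay by_ cy dy ey.
by rewrite !(mul0r, addr0) eqxx.
Qed.
Canonical Z4g := Group Z4_gs.

Lemma U4_pgroup : pgroup p (U4 p).
Proof.
apply/pgroupP => q pq /(Cauchy pq) [x Hx ox].
have p2 : (4 <= p ^ 2)%N.
  by rewrite expnS expn1; exact: (leq_mul (prime_gt1 pp) (prime_gt1 pp)).
have := U4X Hx p2; move/eqP; rewrite -order_dvdn ox Euclid_dvdX // andbT.
by rewrite dvdn_prime2 // inE.
Qed.

Lemma Z4_cent (z x : G) : z \in Z4 p -> x \in U4 p -> commute z x.
Proof.
rewrite Z4P => /and5P[Hz /eqP za /eqP zb /eqP zc /andP[/eqP zd /eqP ze]] Hx.
rewrite /commute.
have [a1 b1 c1 d1 [e1 g1]] := entM Hz Hx.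
have [a2 b2 c2 d2 [e2 g2]] := entM Hx Hz.
apply: U4_eq; rewrite ?(groupM Hz Hx) ?(groupM Hx Hz) //;
  rewrite ?a1 ?a2 ?b1 ?b2 ?c1 ?c2 ?d1 ?d2 ?e1 ?e2 ?g1 ?g2 ?za ?zb ?zc ?zd ?ze; ring.
Qed.

Local Open Scope group_scope.
Lemma U4_norm : U4 p \subset 'N(Z4 p).
Proof.
apply/subsetP => x Hx; apply: (subsetP (cent_sub _)); apply/centP => z Hz.
by apply/esym/Z4_cent.
Qed.

Lemma V4_sub : V4 \subset U4 p.
Proof. by apply/subsetP => x; rewrite V4P => /and4P[]. Qed.

Lemma V4_ab (x y : G) : x \in V4 -> y \in V4 -> commute x y.
Proof.
rewrite !V4P => /and4P[Hx /eqP xa /eqP xb /eqP xc] /and4P[Hy /eqP ya /eqP yb /eqP yc].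
rewrite /commute.
have [a1 b1 c1 d1 [e1 g1]] := entM Hx Hy.
have [a2 b2 c2 d2 [e2 g2]] := entM Hy Hx.
apply: U4_eq; rewrite ?(groupM Hy Hx) ?(groupM Hx Hy) //;
  rewrite ?a1 ?a2 ?b1 ?b2 ?c1 ?c2 ?d1 ?d2 ?e1 ?e2 ?g1 ?g2 ?xa ?xb ?xc ?ya ?yb ?yc; ring.
Qed.

Lemma U4R_V4 (x y : G) : x \in U4 p -> y \in U4 p -> [~ x, y]%g \in V4.
Proof.
move=> Hx Hy; have [a b c _ _] := entR Hx Hy.
by rewrite V4P (U4R_in Hx Hy) a b c eqxx.
Qed.

Lemma U4R_Z4 (x y : G) : x \in U4 p -> y \in V4 -> [~ x, y]%g \in Z4 p.
Proof.
move=> Hx; rewrite V4P => /and4P[Hy /eqP ya /eqP yb /eqP yc].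
have [a b c d [e _]] := entR Hx Hy.
by rewrite Z4P (U4R_in Hx Hy) a b c d e ya yb yc !(mulr0, subrr) eqxx.
Qed.

Lemma U4_der2 : (U4 p)^`(2) = 1%g.
Proof.
have s1 : (U4 p)^`(1) \subset V4.
  rewrite derg1 /commutator gen_subG.
  by apply/subsetP => z /imset2P[x y Hx Hy ->]; apply: U4R_V4.
rewrite dergSn; apply/eqP; rewrite -subG1; apply: subset_trans (commgSS s1 s1) _.
rewrite subG1; apply/eqP/commG1P; apply/subsetP => x Hx; apply/centP => y Hy.
exact: V4_ab.
Qed.

Variables (d n : nat) (f : option nat) (s : ppword p d).
Hypothesis sS2 : in_S2 s.

Lemma gat_in (gT : finGroupType) (D : {group gT}) (g : 'I_d -> gT) k :
  (forall i, g i \in D) -> gat g k \in D.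
Proof. by rewrite /gat; case: insub => [i|] H; rewrite ?group1 ?H. Qed.

Lemma gat_map (gT hT : finGroupType) (h : gT -> hT) (g : 'I_d -> gT) k :
  h 1 = 1 -> gat (fun i => h (g i)) k = h (gat g k).
Proof. by rewrite /gat; case: insub. Qed.

Lemma comm_iterS (gT : finGroupType) (x y : gT) m :
  comm_iter x y m.+1 = [~ comm_iter x y m, y].
Proof. by []. Qed.

Lemma comm_iter_in (gT : finGroupType) (D : {group gT}) (x y : gT) m :
  x \in D -> y \in D -> comm_iter x y m \in D.
Proof. by move=> Hx Hy; elim: m => [|m IH] //; rewrite comm_iterS groupR. Qed.

Lemma comm_iter_morph (gT hT : finGroupType) (D : {group gT})
   (phi : {morphism D >-> hT}) (x y : gT) m :
  x \in D -> y \in D -> comm_iter (phi x) (phi y) m = phi (comm_iter x y m).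
Proof.
move=> Hx Hy; elim: m => [|m IH] //.
by rewrite !comm_iterS IH morphR // comm_iter_in.
Qed.

Lemma relator_morph (gT hT : finGroupType) (D : {group gT})
   (phi : {morphism D >-> hT}) (g : 'I_d -> gT) :
  p.-group (gens g) -> (forall i, g i \in D) ->
  relator n f s (fun i => phi (g i)) = phi (relator n f s g).
Proof.
move=> pg gD.
have gm : forall k, gat (fun i => phi (g i)) k = phi (gat g k).
  by move=> k; apply: gat_map; rewrite morph1.
have sD : pw_eval s g \in D.
  apply: (subsetP _ _ (pw_in s pg)); rewrite /gens gen_subG.
  by apply/subsetP => x /imsetP[i _ ->].
rewrite /relator !gm (pw_nat s phi pg gD) comm_iter_morph ?gat_in //.
have -> : \prod_(k < d./2 - 1) [~ gat (fun i => phi (g i)) (2 * k + 2),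
            gat (fun i => phi (g i)) (2 * k + 3)] =
          phi (\prod_(k < d./2 - 1) [~ gat g (2 * k + 2), gat g (2 * k + 3)]).
  rewrite morph_prod; last by move=> k _; rewrite groupR ?gat_in.
  by apply: eq_bigr => k _; rewrite !gm morphR ?gat_in.
rewrite -morphX ?gat_in // -!morphM //;
  by rewrite ?(groupM, groupX, gat_in, comm_iter_in, group_prod) //;
     move=> *; rewrite groupR ?gat_in.
Qed.

Lemma s_triv (gT : finGroupType) (H : {group gT}) (g : 'I_d -> gT) :
  p.-group H -> H^`(2) = 1 -> (forall i, g i \in H) -> pw_eval s g = 1.
Proof.
move=> pH dH gH.
have sg : gens g \subset H.
  by rewrite /gens gen_subG; apply/subsetP => x /imsetP[i _ ->].
have sS : gensS g \subset H.
  by rewrite /gensS gen_subG; apply/subsetP => x /imsetP[i _ ->].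
have Hs := sS2 (pgroupS sg pH).
rewrite /gensS in Hs sS.
by apply/set1gP; rewrite -dH; apply: (subsetP (dergS 2 sS)).
Qed.

Lemma Fp_pgroup : pgroup p [set: F].
Proof. by rewrite /pgroup cardsT card_Fp // pnat_id. Qed.

Lemma Fp_comm (x y : F) : [~ x, y] = 1.
Proof. by apply/eqP/commgP; rewrite /commute; apply: addrC. Qed.

Lemma Fp_der2 : [set: F]^`(2) = 1.
Proof.
have h1 : [set: F]^`(1) = 1.
  rewrite derg1; apply/commG1P; apply/subsetP => x _; apply/centP => y _.
  by rewrite /commute; apply: addrC.
by rewrite dergSn h1 comm1G.
Qed.

Lemma Fp_qpow (x : F) : (match f with Some k => (1 <= k)%N | None => true end) ->
  x ^+ qval p f = 1.
Proof.
case: f => [k|] //= hk.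
have Hp : x ^+ #|[set: F]| = 1 by apply: expg_cardG; rewrite inE.
rewrite cardsT card_Fp // in Hp.
by case: k hk => // k _; rewrite expnS expgM Hp expg1n.
Qed.

Lemma psi_hom (psi : 'I_d -> F) : (1 <= n)%N ->
  (match f with Some k => (1 <= k)%N | None => true end) ->
  hom_tuple n f s [set: F] psi.
Proof.
move=> n1 fk; split => [j|]; first by rewrite inE.
rewrite /relator Fp_qpow //.
have -> : comm_iter (gat psi 0) (gat psi 1) n = 1.
  by case: n n1 => // n' _; rewrite comm_iterS Fp_comm.
rewrite big1 => [|k _]; last exact: Fp_comm.
rewrite (@s_triv _ [set: F]%G _ Fp_pgroup Fp_der2); last by move=> i; rewrite inE.
by rewrite !mulg1.
Qed.

Lemma U4_qpow (x : G) : x \in U4 p ->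
  (match f with Some k => (1 <= k)%N | None => true end) ->
  (p = 2 -> match f with Some k => (2 <= k)%N | None => true end) ->
  qval p f <> 3 -> x ^+ qval p f = 1.
Proof.
move=> Hx; case: f => [k|] //= hk h2 h3; apply: U4X => //.
have p2 := prime_gt1 pp.
case: k hk h2 h3 => [|[|k]] // _ h2 h3.
  rewrite expn1; case: p pp p2 h2 h3 => [|[|[|[|q]]]] //.
  by move=> _ _ /(_ erefl).
rewrite !expnS; apply: (@leq_trans (p * p)).
  exact: (leq_mul p2 p2).
by rewrite mulnA leq_pmulr // expn_gt0 (ltnW p2).
Qed.

Lemma comm_iter_from (gT : finGroupType) (x y : gT) m m' :
  comm_iter x y m = 1 -> (m <= m')%N -> comm_iter x y m' = 1.
Proof.
move=> H1; elim: m' => [|m' IH]; first by rewrite leqn0 => /eqP <-.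
rewrite leq_eqVlt => /orP[/eqP <- //|]; rewrite ltnS => /IH.
by rewrite comm_iterS => ->; rewrite comm1g.
Qed.

Lemma comm_iter_U4 (x y : G) m : x \in U4 p -> y \in U4 p -> (3 <= m)%N ->
  comm_iter x y m = 1.
Proof.
move=> Hx Hy; apply: comm_iter_from.
have h1 : comm_iter x y 1 \in V4 by apply: U4R_V4.
have h2 : comm_iter x y 2 \in Z4 p.
  rewrite comm_iterS -invgR; apply: (@groupVr _ Z4g); apply: U4R_Z4 => //.
have h2u : comm_iter x y 2 \in U4 p by move: h2; rewrite Z4P => /and5P[].
by rewrite comm_iterS; apply/eqP/commgP/Z4_cent.
Qed.

Lemma comm_iter_V4 (x y : G) m : x \in U4 p -> y \in V4 -> (2 <= m)%N ->
  comm_iter x y m = 1.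
Proof.
move=> Hx Hy; apply: comm_iter_from.
have Hy' : y \in U4 p by apply: (subsetP V4_sub).
have h1 : comm_iter x y 1 \in Z4 p by apply: U4R_Z4.
by rewrite comm_iterS; apply/eqP/commgP/Z4_cent.
Qed.

Lemma prodR (a b : nat -> G) m : (forall k, a k \in U4 p) -> (forall k, b k \in U4 p) ->
  [/\ \prod_(k < m) [~ a k, b k] \in V4,
      ed (\prod_(k < m) [~ a k, b k]) =
        (\sum_(k < m) (ea (a k) * eb (b k) - eb (a k) * ea (b k)))%R,
      ee (\prod_(k < m) [~ a k, b k]) =
        (\sum_(k < m) (eb (a k) * ec (b k) - ec (a k) * eb (b k)))%R &
      eg (\prod_(k < m) [~ a k, b k]) = (\sum_(k < m) comm03 (a k) (b k))%R].
Proof.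
move=> Ha Hb; elim: m => [|m [IH1 IH2 IH3 IH4]].
  rewrite !big_ord0; have [_ [_ [_ [-> [-> ->]]]]] := ent1.
  by split => //; apply: (@group1 _ V4g).
rewrite !big_ord_recr /=.
set P := \prod_(i < m) _ in IH1 IH2 IH3 IH4 *.
have HP : P \in U4 p := subsetP V4_sub _ IH1.
have Hc := U4R_in (Ha m) (Hb m).
have HcV := U4R_V4 (Ha m) (Hb m).
move: (IH1); rewrite V4P => /and4P[_ /eqP Pa /eqP Pb /eqP Pc].
have [ca cb cc cd [ce cg]] := entR (Ha m) (Hb m).
have [_ _ _ d1 [e1 g1]] := entM HP Hc.
split.
- exact: (@groupM _ V4g).
- by rewrite d1 IH2 cd Pa mul0r addr0.
- by rewrite e1 IH3 ce Pb mul0r addr0.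
- by rewrite g1 IH4 cg Pa cc !mul0r mulr0 !addr0.
Qed.

Lemma relU4 (g : 'I_d -> G) : (forall i, g i \in U4 p) ->
  relator n f s g = gat g 0 ^+ qval p f * comm_iter (gat g 0) (gat g 1) n *
    \prod_(k < d./2 - 1) [~ gat g (2 * k + 2), gat g (2 * k + 3)].
Proof.
move=> gU; rewrite /relator (@s_triv _ U4g _ U4_pgroup U4_der2 gU).
by rewrite mulg1.
Qed.

Lemma supd_mkM a b c dd e g (i : 'I_3) :
  supd (mkM a b c dd e g) i = if val i == 0%N then a else if val i == 1%N then b else c.
Proof. by case: i => [[|[|[|i]]] Hi] //; rewrite /supd mxE. Qed.

Lemma supd_U4 (x : G) (i : 'I_3) : x \in U4 p ->
  supd (GLval x) i = if val i == 0%N then ea x else if val i == 1%N then eb x else ec x.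
Proof. by move=> Hx; rewrite (U4P Hx) supd_mkM. Qed.

Lemma mkG_in a b c dd e g : mkG a b c dd e g \in U4 p.
Proof. exact: (inU4 (mkGE _ _ _ _ _ _)). Qed.

Lemma mkG_ent a b c dd e g :
  let x := mkG a b c dd e g in
  ea x = a /\ eb x = b /\ ec x = c /\ ed x = dd /\ ee x = e /\ eg x = g.
Proof. exact: entE (mkGE _ _ _ _ _ _). Qed.

Lemma mkG_ea a b c dd e g : ea (mkG a b c dd e g) = a.
Proof. by have [-> _] := mkG_ent a b c dd e g. Qed.
Lemma mkG_eb a b c dd e g : eb (mkG a b c dd e g) = b.
Proof. by have [_ [-> _]] := mkG_ent a b c dd e g. Qed.
Lemma mkG_ec a b c dd e g : ec (mkG a b c dd e g) = c.
Proof. by have [_ [_ [-> _]]] := mkG_ent a b c dd e g. Qed.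
Lemma mkG_ed a b c dd e g : ed (mkG a b c dd e g) = dd.
Proof. by have [_ [_ [_ [-> _]]]] := mkG_ent a b c dd e g. Qed.
Lemma mkG_ee a b c dd e g : ee (mkG a b c dd e g) = e.
Proof. by have [_ [_ [_ [_ [-> _]]]]] := mkG_ent a b c dd e g. Qed.
Lemma mkG_eg a b c dd e g : eg (mkG a b c dd e g) = g.
Proof. by have [_ [_ [_ [_ [_ ->]]]]] := mkG_ent a b c dd e g. Qed.

Lemma gat_lt (gT : finGroupType) (g : 'I_d -> gT) k (h : (k < d)%N) :
  gat g k = g (Ordinal h).
Proof.
rewrite /gat; case: insubP => [i _ vi|]; last by rewrite h.
by congr g; apply: val_inj.
Qed.

Lemma gat_ge (gT : finGroupType) (g : 'I_d -> gT) k : (d <= k)%N -> gat g k = 1.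
Proof. by move=> h; rewrite /gat insubF // ltnNge h. Qed.

Definition modA (A : 'I_d -> G) (m : nat) (s0 t0 : F) : 'I_d -> G :=
  fun i => if val i == m then
    mkG (ea (A i)) (eb (A i)) (ec (A i)) (ed (A i) + s0) (ee (A i) + t0) (eg (A i))
  else A i.

Lemma modA_in A m s0 t0 : (forall i, A i \in U4 p) -> forall i, modA A m s0 t0 i \in U4 p.
Proof. by move=> HA i; rewrite /modA; case: ifP => _; rewrite ?mkG_in ?HA. Qed.

Lemma modA_supd A m s0 t0 : (forall i, A i \in U4 p) ->
  forall i i', supd (GLval (modA A m s0 t0 i)) i' = supd (GLval (A i)) i'.
Proof.
move=> HA i i'; rewrite /modA; case: ifP => _ //.
by rewrite mkGE supd_mkM supd_U4.
Qed.

Lemma modA_other A m s0 t0 k : k != m -> gat (modA A m s0 t0) k = gat A k.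
Proof.
move=> km; rewrite /gat; case: insubP => // i _ vi.
by rewrite /modA vi (negbTE km).
Qed.

Lemma modA_ent A m s0 t0 k : (forall i, A i \in U4 p) ->
  let B := gat (modA A m s0 t0) k in
  [/\ ea B = ea (gat A k), eb B = eb (gat A k), ec B = ec (gat A k),
      ed B = (ed (gat A k) + (if (k == m) && (k < d)%N then s0 else 0))%R &
      ee B = (ee (gat A k) + (if (k == m) && (k < d)%N then t0 else 0))%R].
Proof.
move=> HA /=.
have [km|km] := eqVneq k m; last by rewrite modA_other // !addr0.
subst k; case: (ltnP m d) => hm /=; last by rewrite !gat_ge // !addr0.
rewrite !(gat_lt _ hm) /modA /= eqxx.
by rewrite mkG_ea mkG_eb mkG_ec mkG_ed mkG_ee.
Qed.

Lemma sum_mod (Fn : G -> G -> F) (A B : 'I_d -> G) M k0 : (k0 < M)%N ->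
  (forall k, k != k0 -> gat B (2 * k + 2) = gat A (2 * k + 2) /\
                        gat B (2 * k + 3) = gat A (2 * k + 3)) ->
  (\sum_(k < M) Fn (gat B (2 * k + 2)) (gat B (2 * k + 3)) =
   \sum_(k < M) Fn (gat A (2 * k + 2)) (gat A (2 * k + 3)) +
   (Fn (gat B (2 * k0 + 2)) (gat B (2 * k0 + 3)) -
    Fn (gat A (2 * k0 + 2)) (gat A (2 * k0 + 3))))%R.
Proof.
move=> hk H.
rewrite (bigD1 (Ordinal hk)) // [in RHS](bigD1 (Ordinal hk)) //=.
rewrite (eq_bigr (fun k : 'I_M => Fn (gat A (2 * k + 2)) (gat A (2 * k + 3)))).
  set S := \sum_(i < M | _) _; ring.
move=> k hk'.
have hk0 : (val k != k0) by apply: contra hk' => /eqP e; apply/eqP/val_inj.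
by have [-> ->] := H k hk0.
Qed.

Lemma gens_p (g : 'I_d -> G) : (forall i, g i \in U4 p) -> p.-group (gens g).
Proof.
move=> gU; apply: pgroupS U4_pgroup.
by rewrite /gens gen_subG; apply/subsetP => x /imsetP[i _ ->].
Qed.

Lemma relP (B : 'I_d -> G) : (3 <= n)%N ->
  (match f with Some k => (1 <= k)%N | None => true end) ->
  (p = 2 -> match f with Some k => (2 <= k)%N | None => true end) ->
  qval p f <> 3 -> (forall i, B i \in U4 p) ->
  relator n f s B = \prod_(k < d./2 - 1) [~ gat B (2 * k + 2), gat B (2 * k + 3)].
Proof.
move=> n3 fk f2 q3 BU.
rewrite relU4 // U4_qpow ?(gat_in (D := U4g)) //.
by rewrite comm_iter_U4 ?(gat_in (D := U4g)) // !mul1g.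
Qed.

Lemma delta_y (x y y' : G) s0 t0 : ea y' = ea y -> eb y' = eb y -> ec y' = ec y ->
  ed y' = (ed y + s0)%R -> ee y' = (ee y + t0)%R ->
  (comm03 x y' - comm03 x y = ea x * t0 - ec x * s0)%R.
Proof. by move=> h1 h2 h3 h4 h5; rewrite /comm03 h1 h2 h3 h4 h5; ring. Qed.

Lemma delta_x (x x' y : G) s0 t0 : ea x' = ea x -> eb x' = eb x -> ec x' = ec x ->
  ed x' = (ed x + s0)%R -> ee x' = (ee x + t0)%R ->
  (comm03 x' y - comm03 x y = ec y * s0 - ea y * t0)%R.
Proof. by move=> h1 h2 h3 h4 h5; rewrite /comm03 h1 h2 h3 h4 h5; ring. Qed.

Lemma idx_odd (j dd : nat) : (2 <= j)%N -> (j < dd)%N -> ~~ odd dd -> odd j ->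
  exists k0, [/\ (k0 < dd./2 - 1)%N, j = (2 * k0 + 3)%N & (2 * k0 + 2 < dd)%N].
Proof. by move=> *; exists (j./2 - 1)%N; split; lia. Qed.
Lemma idx_even (j dd : nat) : (2 <= j)%N -> (j < dd)%N -> ~~ odd dd -> ~~ odd j ->
  exists k0, [/\ (k0 < dd./2 - 1)%N, j = (2 * k0 + 2)%N & (2 * k0 + 3 < dd)%N].
Proof. by move=> *; exists (j./2 - 1)%N; split; lia. Qed.
Lemma ne22 (k k0 : nat) : k != k0 -> (2 * k + 2)%N != (2 * k0 + 2)%N.
Proof. by move=> h; apply/eqP => e; move/eqP: h; apply; lia. Qed.
Lemma ne32 (k k0 : nat) : k != k0 -> (2 * k + 3)%N != (2 * k0 + 2)%N.
Proof. by move=> h; apply/eqP; lia. Qed.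
Lemma ne23 (k k0 : nat) : k != k0 -> (2 * k + 2)%N != (2 * k0 + 3)%N.
Proof. by move=> h; apply/eqP; lia. Qed.
Lemma ne33 (k k0 : nat) : k != k0 -> (2 * k + 3)%N != (2 * k0 + 3)%N.
Proof. by move=> h; apply/eqP => e; move/eqP: h; apply; lia. Qed.
Lemma ne3 (k0 : nat) : (2 * k0 + 3)%N != (2 * k0 + 2)%N.
Proof. by apply/eqP; lia. Qed.
Lemma ne2 (k0 : nat) : (2 * k0 + 2)%N != (2 * k0 + 3)%N.
Proof. by apply/eqP; lia. Qed.

Lemma vanish_dir (psi : 'I_3 -> 'I_d -> F) : (3 <= n)%N ->
  (match f with Some k => (1 <= k)%N | None => true end) ->
  (p = 2 -> match f with Some k => (2 <= k)%N | None => true end) ->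
  qval p f <> 3 -> ~~ odd d ->
  massey3_defined n f s psi -> massey3_vanishes n f s psi.
Proof.
move=> n3 fk f2 q3 dev [rho [[rhoH relrho] HA]].
have [A HA'] := fin_all_exists HA.
have AU : forall j, A j \in U4 p by move=> j; case: (HA' j).
have Asupd : forall j i, supd (GLval (A j)) i = psi i j by move=> j; case: (HA' j).
have Arho : rho = (fun j => coset_morphism (Z4 p) (A j)).
  by apply: FunctionalExtensionality.functional_extensionality => j; case: (HA' j).
have relZ : relator n f s A \in Z4 p.
  have AN : forall i, A i \in 'N(Z4 p) by move=> i; apply: (subsetP U4_norm).
  have := relator_morph (coset_morphism (Z4 p)) (gens_p AU) AN.
  rewrite -Arho relrho => /esym H1.
  apply: (coset_idr (H := Z4g)) => //.
  rewrite relP //; apply: (subsetP U4_norm).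
  by apply: (group_prod (G := U4g)) => k _; rewrite groupR ?(gat_in (D := U4g)).
set M := (d./2 - 1)%N.
rewrite relP // in relZ.
have [PV Ped Pee Peg] := prodR M (fun k => gat_in (D := U4g) (2 * k + 2)%N AU)
                                  (fun k => gat_in (D := U4g) (2 * k + 3)%N AU).
move: relZ; rewrite Z4P => /and5P[_ _ _ _ /andP[/eqP ed0 /eqP ee0]].
have gU : forall (B : 'I_d -> G), (forall i, B i \in U4 p) -> forall k, gat B k \in U4 p.
  by move=> B BU k; apply: (gat_in (D := U4g)).
have fin : forall B : 'I_d -> G, (forall i, B i \in U4 p) ->
    (forall j i, supd (GLval (B j)) i = psi i j) ->
    (\sum_(k < M) comm03 (gat B (2 * k + 2)%N) (gat B (2 * k + 3)%N) = 0)%R ->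
    (forall k, ea (gat B k) = ea (gat A k) /\ eb (gat B k) = eb (gat A k) /\
               ec (gat B k) = ec (gat A k)) ->
    massey3_vanishes n f s psi.
  move=> B BU Bsupd Bsum Bco; exists B; split => //; split => //.
  rewrite relP //.
  have [PVB PedB PeeB PegB] := prodR M (fun k => gU B BU (2 * k + 2)%N)
                                       (fun k => gU B BU (2 * k + 3)%N).
  move: PVB; rewrite V4P => /and4P[PU /eqP a0 /eqP b0 /eqP c0].
  apply: U4_eq1 => //; rewrite ?PegB //.
    rewrite PedB -[RHS]ed0 Ped; apply: eq_bigr => k _.
    by have [-> [-> _]] := Bco (2 * k + 2)%N; have [-> [-> _]] := Bco (2 * k + 3)%N.
  rewrite PeeB -[RHS]ee0 Pee; apply: eq_bigr => k _.
  by have [_ [-> ->]] := Bco (2 * k + 2)%N; have [_ [-> ->]] := Bco (2 * k + 3)%N.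
pose ex := [exists j : 'I_d, (2 <= j)%N && ((ea (A j) != 0) || (ec (A j) != 0))].
case: (boolP ex) => [/existsP [j /andP [j2 hj]] | /existsPn hno].
  have hjd := ltn_ord j.
  have gAj : gat A j = A j by rewrite (gat_lt _ hjd); congr A; apply: val_inj.
  have [D PegD] : exists D : F,
      (\sum_(k < M) comm03 (gat A (2 * k + 2)%N) (gat A (2 * k + 3)%N))%R = D.
    by eexists.
  case: (boolP (odd j)) => oj.
    have [k0 [hk0 ej hm]] := idx_odd j2 hjd dev oj.
    have [s0 [t0 Hst]] : exists s0 t0 : F, (D + (ec (A j) * s0 - ea (A j) * t0) = 0)%R.
      case: (boolP (ea (A j) != 0)) => ha.
        by exists 0%R, (D / ea (A j))%R; field.
      have hc : ec (A j) != 0 by move: hj; rewrite (negbTE ha).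
      by exists (- D / ec (A j))%R, 0%R; field.
    apply: (fin (modA A (2 * k0 + 2) s0 t0)).
    - exact: modA_in.
    - by move=> j' i; rewrite modA_supd.
    - rewrite (sum_mod comm03 (A := A) hk0); last first.
        by move=> k hk; split; apply: modA_other; [apply: ne22 | apply: ne32].
      rewrite PegD.
      have [h1 h2 h3 h4 h5] := modA_ent (2 * k0 + 2) s0 t0 (2 * k0 + 2)%N AU.
      rewrite eqxx hm /= in h4 h5.
      rewrite (@modA_other _ _ _ _ (2 * k0 + 3)%N); last exact: ne3.
      by rewrite (delta_x _ h1 h2 h3 h4 h5) -ej gAj.
    - by move=> k; have [-> -> -> _ _] := modA_ent (2 * k0 + 2) s0 t0 k AU.
  have [k0 [hk0 ej hm]] := idx_even j2 hjd dev oj.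
  have [s0 [t0 Hst]] : exists s0 t0 : F, (D + (ea (A j) * t0 - ec (A j) * s0) = 0)%R.
    case: (boolP (ea (A j) != 0)) => ha.
      by exists 0%R, (- D / ea (A j))%R; field.
    have hc : ec (A j) != 0 by move: hj; rewrite (negbTE ha).
    by exists (D / ec (A j))%R, 0%R; field.
  apply: (fin (modA A (2 * k0 + 3) s0 t0)).
  - exact: modA_in.
  - by move=> j' i; rewrite modA_supd.
  - rewrite (sum_mod comm03 (A := A) hk0); last first.
      by move=> k hk; split; apply: modA_other; [apply: ne23 | apply: ne33].
    rewrite PegD.
    have [h1 h2 h3 h4 h5] := modA_ent (2 * k0 + 3) s0 t0 (2 * k0 + 3)%N AU.
    rewrite eqxx hm /= in h4 h5.
    rewrite (@modA_other _ _ _ _ (2 * k0 + 2)%N); last exact: ne2.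
    by rewrite (delta_y _ h1 h2 h3 h4 h5) -ej gAj.
  - by move=> k; have [-> -> -> _ _] := modA_ent (2 * k0 + 3) s0 t0 k AU.
apply: (fin A); [exact: AU | exact: Asupd | | by []].
have z : forall m, (2 <= m)%N -> ea (gat A m) = 0 /\ ec (gat A m) = 0.
  move=> m hm; case: (ltnP m d) => hmd.
    rewrite (gat_lt _ hmd); move: (hno (Ordinal hmd)).
    by rewrite /= hm /= negb_or !negbK => /andP[/eqP -> /eqP ->].
  by rewrite gat_ge //; have [-> [_ [-> _]]] := ent1.
apply: big1 => k _.
have [xa xc] := z (2 * k + 2)%N (leq_addl _ _).
have [ya yc] := z (2 * k + 3)%N (leq_trans (isT : (2 <= 3)%N) (leq_addl _ _)).
by rewrite /comm03 xa xc ya yc; ring.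
Qed.
Local Notation i0 := (@Ordinal 3 0 isT).
Local Notation i1 := (@Ordinal 3 1 isT).
Local Notation i2 := (@Ordinal 3 2 isT).

Lemma inV4 (x : G) : x \in U4 p -> ea x = 0 -> eb x = 0 -> ec x = 0 -> x \in V4.
Proof. by move=> Hx ha hb hc; rewrite V4P Hx ha hb hc eqxx. Qed.

Lemma supd_coords (x : G) (v : 'I_3 -> F) : x \in U4 p ->
  (forall i, supd (GLval x) i = v i) -> [/\ ea x = v i0, eb x = v i1 & ec x = v i2].
Proof.
move=> Hx H; split.
- by rewrite -H supd_U4.
- by rewrite -H supd_U4.
- by rewrite -H supd_U4.
Qed.

Lemma by3 (u v w : F) : (3%:R : F) = 0 -> u = (3%:R * v + w)%R -> u = w.
Proof. by move=> h ->; rewrite h mul0r add0r. Qed.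

Lemma cube (x : G) : x \in U4 p -> (3%:R : F) = 0 ->
  x ^+ 3 \in Z4 p /\ eg (x ^+ 3) = (ea x * eb x * ec x)%R.
Proof.
move=> Hx h3.
have -> : x ^+ 3 = x * (x * x) by rewrite !expgS expg0 mulg1.
have Hxx := groupM Hx Hx : x * x \in U4g.
have [a1 b1 c1 d1 [e1 g1]] := entM Hx Hxx.
have [a2 b2 c2 d2 [e2 g2]] := entM Hx Hx.
split; last first.
  by apply: (by3 (v := eg x + ea x * ee x + ed x * ec x) h3); rewrite ?g1 ?e2 ?c2 ?d2 ?g2; ring.
rewrite Z4P (groupM Hx Hxx) /=.
apply/and5P; split; apply/eqP.
- by apply: (by3 (v := ea x) h3); rewrite ?a1 ?a2; ring.
- by apply: (by3 (v := eb x) h3); rewrite ?b1 ?b2; ring.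
- by apply: (by3 (v := ec x) h3); rewrite ?c1 ?c2; ring.
- by apply: (by3 (v := ed x + ea x * eb x) h3); rewrite ?d1 ?b2 ?d2; ring.
- by apply: (by3 (v := ee x + eb x * ec x) h3); rewrite ?e1 ?c2 ?e2; ring.
Qed.

Lemma prod_V4 (g : 'I_d -> G) :
  (forall m, (2 <= m)%N -> gat g m \in V4) ->
  \prod_(k < d./2 - 1) [~ gat g (2 * k + 2)%N, gat g (2 * k + 3)%N] = 1.
Proof.
move=> HV; apply: big1 => k _; apply/eqP/commgP/V4_ab; apply: HV.
  exact: leq_addl.
exact: (leq_trans (isT : (2 <= 3)%N) (leq_addl _ _)).
Qed.

Lemma rel_q3 (g : 'I_d -> G) : qval p f = 3 -> (2 <= n)%N -> (3%:R : F) = 0 ->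
  (forall i, g i \in U4 p) ->
  ea (gat g 0) = 1%R -> eb (gat g 0) = 1%R -> ec (gat g 0) = 1%R ->
  (forall m, m != 0%N -> gat g m \in V4) ->
  relator n f s g \in Z4 p /\ eg (relator n f s g) = 1%R.
Proof.
move=> q3 n2 h3 gU ha hb hc HV.
rewrite relU4 // q3 comm_iter_V4 ?(gat_in (D := U4g)) ?HV // prod_V4; last first.
  by move=> m hm; apply: HV; case: m hm.
rewrite !mulg1.
have [C1 C2] := cube (gat_in (D := U4g) 0 gU) h3.
by rewrite C1 C2 ha hb hc !mul1r.
Qed.

Lemma comm_iter2_Z4 (x y : G) : x \in U4 p -> y \in U4 p -> comm_iter x y 2 \in Z4 p.
Proof.
move=> Hx Hy.
rewrite comm_iterS -invgR; apply: (@groupVr _ Z4g); apply: U4R_Z4 => //.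
exact: U4R_V4.
Qed.

Lemma rel_n2 (g : 'I_d -> G) : n = 2 ->
  (match f with Some k => (1 <= k)%N | None => true end) ->
  (p = 2 -> match f with Some k => (2 <= k)%N | None => true end) ->
  qval p f <> 3 ->
  (forall i, g i \in U4 p) ->
  ea (gat g 0) = 1%R -> eb (gat g 0) = 0%R -> ec (gat g 0) = 0%R ->
  ea (gat g 1) = 0%R -> eb (gat g 1) = 1%R -> ec (gat g 1) = 1%R ->
  (forall m, (2 <= m)%N -> gat g m \in V4) ->
  relator n f s g \in Z4 p /\ eg (relator n f s g) = 1%R.
Proof.
move=> n2 fk f2 q3 gU a0 b0 c0 a1 b1 c1 HV.
have g0U := gat_in (D := U4g) 0 gU; have g1U := gat_in (D := U4g) 1 gU.
rewrite relU4 // U4_qpow // prod_V4 // mulg1 mul1g n2.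
split; first exact: comm_iter2_Z4.
rewrite comm_iterS.
have c1U := U4R_in g0U g1U.
have [ra rb rc rd [re _]] := entR g0U g1U.
have [_ _ _ _ [_ ->]] := entR c1U g1U.
rewrite /comm03 /= ra rb rc rd re a0 b0 c0 a1 b1 c1; ring.
Qed.

Lemma gat_coords (g : 'I_d -> G) (psi : 'I_3 -> 'I_d -> F) m (h : (m < d)%N) :
  (forall i, g i \in U4 p) -> (forall j i, supd (GLval (g j)) i = psi i j) ->
  [/\ ea (gat g m) = psi i0 (Ordinal h), eb (gat g m) = psi i1 (Ordinal h)
    & ec (gat g m) = psi i2 (Ordinal h)].
Proof.
move=> gU gs; rewrite (gat_lt _ h).
exact: (supd_coords (v := fun i => psi i (Ordinal h)) (gU _) (gs _)).
Qed.

Lemma gat_V4 (g : 'I_d -> G) (psi : 'I_3 -> 'I_d -> F) m :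
  (forall i, g i \in U4 p) -> (forall j i, supd (GLval (g j)) i = psi i j) ->
  (forall h : (m < d)%N, [/\ psi i0 (Ordinal h) = 0, psi i1 (Ordinal h) = 0
                           & psi i2 (Ordinal h) = 0]%R) ->
  gat g m \in V4.
Proof.
move=> gU gs H; case: (ltnP m d) => h; last by rewrite gat_ge // group1.
have [a b c] := gat_coords h gU gs; have [a' b' c'] := H h.
by apply: inV4; rewrite ?(gat_in (D := U4g)) // ?a ?b ?c.
Qed.

Lemma main_iff : (4 <= d)%N -> ~~ odd d -> (2 <= n)%N ->
  (match f with Some k => (1 <= k)%N | None => true end) ->
  (p = 2 -> match f with Some k => (2 <= k)%N | None => true end) ->
  (all_defined_massey3_vanish n f s <-> (qval p f <> 3 /\ (3 <= n)%N)).
Proof.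
move=> d4 dev n2 fk f2; split; last first.
  by move=> [q3 n3] psi _ Hdef; apply: vanish_dir.
move=> H.
have key : forall psi : 'I_3 -> 'I_d -> F,
   (forall g : 'I_d -> G, (forall i, g i \in U4 p) ->
      (forall j i, supd (GLval (g j)) i = psi i j) ->
      relator n f s g \in Z4 p /\ eg (relator n f s g) = 1%R) -> False.
  move=> psi Hg.
  pose sg := fun j => mkG (psi i0 j) (psi i1 j) (psi i2 j) 0 0 0.
  have sgU : forall j, sg j \in U4 p by move=> j; apply: mkG_in.
  have sgs : forall j i, supd (GLval (sg j)) i = psi i j.
    move=> j i; rewrite mkGE supd_mkM.
    by case: i => [[|[|[|i]]] Hi] //=; congr psi; apply: val_inj.
  have [Hz _] := Hg sg sgU sgs.
  have Hdef : massey3_defined n f s psi.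
    exists (fun j => coset (Z4 p) (sg j)); split.
      split; first by move=> j; exact: (@mem_quotient _ Z4g _ U4g (sgU j)).
      have := relator_morph (coset_morphism (Z4 p)) (gens_p sgU)
                 (fun i => subsetP U4_norm _ (sgU i)).
      by move=> ->; apply: (coset_id (A := Z4g)).
    by move=> j; exists (sg j); split.
  have [t [[tU trel] ts]] := H psi (fun i => psi_hom _ (ltnW n2) fk) Hdef.
  have [_ E] := Hg t tU ts.
  move: E; rewrite trel; have [_ [_ [_ [_ [_ ->]]]]] := ent1.
  by move/eqP; rewrite eq_sym oner_eq0.
have q3 : qval p f <> 3.
  move=> q3.
  have p3 : p = 3.
    move: q3 fk; case: f => [k|] //= q3 hk.
    have : (p %| p ^ k)%N by rewrite (Euclid_dvdX _ _ pp) dvdnn hk.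
    by rewrite q3 (dvdn_prime2 pp) // => /eqP.
  have h3 : (3%:R : F) = 0.
    have e : (3%:R : F) = p%:R by rewrite p3.
    by rewrite e pchar_Fp_0.
  apply: (key (fun i j => if nat_of_ord j == 0%N then 1 else 0)%R).
  move=> g gU gs.
  have h0 : (0 < d)%N by apply: leq_trans d4.
  have [a b c] := gat_coords h0 gU gs.
  apply: rel_q3 => //; rewrite ?a ?b ?c //.
  move=> m hm; apply: (gat_V4 gU gs) => h /=.
  by rewrite (negbTE hm).
have n3 : (3 <= n)%N.
  rewrite ltnNge; apply/negP => hn.
  have en : n = 2 by apply/eqP; rewrite eqn_leq hn n2.
  apply: (key (fun i j => if i == i0 then (if nat_of_ord j == 0%N then 1 else 0)
                          else (if nat_of_ord j == 1%N then 1 else 0))%R).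
  move=> g gU gs.
  have h0 : (0 < d)%N by apply: leq_trans d4.
  have h1 : (1 < d)%N by apply: leq_trans d4.
  have [a0 b0 c0] := gat_coords h0 gU gs.
  have [a1 b1 c1] := gat_coords h1 gU gs.
  apply: rel_n2 => //; rewrite ?a0 ?b0 ?c0 ?a1 ?b1 ?c1 //.
  move=> m hm; apply: (gat_V4 gU gs) => h /=.
  have [m0 m1] : (m == 0%N) = false /\ (m == 1%N) = false.
    by case: m hm {h} => [|[|m]].
  by rewrite m0 m1.
by split.
Qed.

End Coords.

Unset Implicit Arguments.

Theorem proposition5p7 (p d n : nat) (f : option nat) (s : ppword p d) :
  prime p -> (4 <= d)%N -> ~~ odd d -> (2 <= n)%N ->
  (match f with Some k => (1 <= k)%N | None => true end) ->
  (p = 2 -> match f with Some k => (2 <= k)%N | None => true end) ->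
  in_S2 s ->
  (all_defined_massey3_vanish n f s <-> (qval p f <> 3 /\ (3 <= n)%N)).
Proof.
move=> pp d4 dev n2 fk f2 sS.
exact: (main_iff pp sS d4 dev n2 fk f2).
Qed.
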